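(* For a parking graph $P$ on $[n]$, let $\psi(P)\subseteq\mathbb{R}^n$ be the set of all $\mathbf{x}$ satisfying: $x_j-x_k\ge 1$ for every down edge $j\leftarrow k$ of $P$; $0\le x_j-x_k\le 1$ for every downish edge $jk$ of $P$ ($j<k$); and $x_j-x_k\le 0$ for every up edge $j\rightarrow k$ of $P$. Then for every parking graph $P$ the set $\psi(P)$ has nonempty interior and its interior is a region of the $n$-dimensional Shi arrangement; and the map sending $P$ to the interior of $\psi(P)$ is a bijection between the set of parking graphs on $[n]$ and the set of regions of the $n$-dimensional Shi arrangement.
   Context: The $n$-dimensional Shi arrangement is the set of hyperplanes in $\mathbb{R}^n$ given by $x_j-x_k=0$ and $x_j-x_k=1$ for all $1\le j<k\le n$. A region of it is a connected component of the complement in $\mathbb{R}^n$ of the union of these hyperplanes. A mixed graph may contain both undirected and directed edges. A parking graph $P$ on $[n]$ is a mixed graph with vertex set $[n]$ in which every pair $\{j,k\}$ with $1\le j<k\le n$ is joined by exactly one edge, which is of exactly one of three types: a down edge $j\leftarrow k$ (directed from $k$ to $j$), an up edge $j\rightarrow k$ (directed from $j$ to $k$), or a downish edge $jk$ (undirected). Let $\vec P$ be the directed graph obtained from $P$ by keeping all directed edges and replacing every downish edge $jk$ ($j<k$) by the directed edge $j\leftarrow k$. $P$ must satisfy the source-sink condition: (i) $\vec P$ is acyclic, and (ii) for every triangle of $P$ among whose three edges there is at least one down edge and at least one downish edge, the source (vertex of in-degree $0$ within the triangle in $\vec P$) and the sink (vertex of out-degree $0$ within the triangle in $\vec P$) are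 not joined by a downish edge in $P$. *)

(* Defs.v *)
From Stdlib Require Import Reals.
From mathcomp Require Import all_boot.
Set Implicit Arguments. Unset Strict Implicit. Unset Printing Implicit Defensive.

(* Points of R^n: coordinates indexed by 'I_n = {0,...,n-1} (standing for [n]). *)
Definition pt (n : nat) := 'I_n -> R.

(* ---------- Topology of R^n (sup-norm balls; same topology as Euclidean) ---------- *)
Definition Rn_ball n (x : pt n) (r : R) (y : pt n) : Prop :=
  forall i, Rlt (Rabs (Rminus (y i) (x i))) r.

Definition Rn_open n (U : pt n -> Prop) : Prop :=
  forall x, U x -> exists r, Rlt R0 r /\ forall y, Rn_ball x r y -> U y.

Definition Rn_interior n (S : pt n -> Prop) (x : pt n) : Prop :=
  exists r, Rlt R0 r /\ forall y, Rn_ball x r y -> S y.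

Definition Rn_connected n (S : pt n -> Prop) : Prop :=
  forall U V : pt n -> Prop, Rn_open U -> Rn_open V ->
    (forall x, S x -> U x \/ V x) ->
    (forall x, S x -> U x -> V x -> False) ->
    (exists x, S x /\ U x) -> (exists x, S x /\ V x) -> False.

Definition conn_component n (A C : pt n -> Prop) : Prop :=
  (forall x, C x -> A x) /\ (exists x, C x) /\ Rn_connected C /\
  (forall D : pt n -> Prop, (forall x, D x -> A x) -> Rn_connected D ->
     (forall x, C x -> D x) -> forall x, D x -> C x).

Definition shi_complement n (x : pt n) : Prop :=
  forall j k : 'I_n, (j < k)%N -> Rminus (x j) (x k) <> R0 /\ Rminus (x j) (x k) <> R1.

Definition shi_region n (C : pt n -> Prop) : Prop :=
  conn_component (@shi_complement n) C.

Definition same_set n (A B : pt n -> Prop) : Prop := forall x, A x <-> B x.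

(* Edge types for a pair j < k: Down = (j <- k), Up = (j -> k), Downish = undirected jk. *)
Inductive edge := Down | Up | Downish.

Definition isDown e := match e with Down => true | _ => false end.
Definition isUp e := match e with Up => true | _ => false end.
Definition isDownish e := match e with Downish => true | _ => false end.

(* A mixed complete graph on 'I_n: the edge between j < k is P j k.
   Values P j k with ~ (j < k) are irrelevant (ignored everywhere). *)
Definition mgraph (n : nat) := 'I_n -> 'I_n -> edge.

Definition lab n (P : mgraph n) (u v : 'I_n) : edge :=
  if (u < v)%N then P u v else P v u.

(* arc of vec P from u to v: up edges kept, down and downish edges point down *)
Definition arc n (P : mgraph n) : rel 'I_n := fun u v =>
  if (u < v)%N then isUp (P u v)
  else if (v < u)%N then ~~ isUp (P v u) else false.

Definition acyclic n (P : mgraph n) : Prop :=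
  forall u v : 'I_n, arc P u v -> ~~ connect (arc P) v u.

Definition triangle_cond n (P : mgraph n) : Prop :=
  forall a b c : 'I_n, (a < b)%N -> (b < c)%N ->
    let T := [:: a; b; c] in
    [|| isDown (P a b), isDown (P a c) | isDown (P b c)] ->
    [|| isDownish (P a b), isDownish (P a c) | isDownish (P b c)] ->
    forall s t : 'I_n, s \in T -> t \in T -> s != t ->
      (forall u, u \in T -> ~~ arc P u s) ->
      (forall u, u \in T -> ~~ arc P t u) ->
      ~~ isDownish (lab P s t).

Definition parking_graph n (P : mgraph n) : Prop := acyclic P /\ triangle_cond P.

Definition same_graph n (P Q : mgraph n) : Prop :=
  forall j k : 'I_n, (j < k)%N -> P j k = Q j k.

Definition psi n (P : mgraph n) (x : pt n) : Prop :=
  forall j k : 'I_n, (j < k)%N ->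
    match P j k with
    | Down => Rle R1 (Rminus (x j) (x k))
    | Downish => Rle R0 (Rminus (x j) (x k)) /\ Rle (Rminus (x j) (x k)) R1
    | Up => Rle (Rminus (x j) (x k)) R0
    end.

Arguments Rn_ball {n}. Arguments Rn_open {n}. Arguments Rn_interior {n}. Arguments Rn_connected {n}.
Arguments conn_component {n}. Arguments shi_complement {n}. Arguments shi_region {n}.
Arguments same_set {n}. Arguments psi {n}.

(* Main.v *)
From Pilot Require Import Defs.
From Stdlib Require Import Reals Lra Lia Classical.
From mathcomp Require Import all_boot zify.
Import Pilot.Defs.
Set Implicit Arguments. Unset Strict Implicit. Unset Printing Implicit Defensive.
Local Open Scope R_scope.

Definition constr (e : edge) (d : R) : Prop :=
  match e with
  | Down => 1 < d
  | Downish => 0 < d /\ d < 1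
  | Up => d < 0
  end.

Definition strict n (P : mgraph n) (x : pt n) : Prop :=
  forall j k : 'I_n, (j < k)%N -> constr (P j k) (x j - x k).

Lemma ball_diff n (x y : pt n) r (j k : 'I_n) :
  Rn_ball x r y -> Rabs ((y j - y k) - (x j - x k)) < 2 * r.
Proof.
move=> H; have := H j; have := H k; unfold Rminus.
move=> /Rabs_def2 [h1 h2] /Rabs_def2 [h3 h4]; apply: Rabs_def1; lra.
Qed.

Lemma ball_mono n (x y : pt n) r r' : r <= r' -> Rn_ball x r y -> Rn_ball x r' y.
Proof. move=> Hr H i; have := H i; lra. Qed.

Lemma fin_min (I : finType) (F : I -> R -> Prop) :
  (forall i r r', 0 < r' -> r' <= r -> F i r -> F i r') ->
  (forall i, exists r, 0 < r /\ F i r) -> exists r, 0 < r /\ forall i, F i r.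
Proof.
move=> Hm Hex.
suff: forall s : seq I, exists r, 0 < r /\ forall i, i \in s -> F i r.
  move=> /(_ (enum I)) [r [Hr H]]; exists r; split => // i; apply: H; by rewrite mem_enum.
elim => [|a s [r [Hr IH]]]; first by exists 1; split => //; lra.
have [ra [Hra Ha]] := Hex a; exists (Rmin r ra); split; first exact: Rmin_pos.
move=> i; rewrite in_cons => /orP [/eqP ->|Hi].
  apply: Hm Ha; [exact: Rmin_pos | exact: Rmin_r].
apply: Hm (IH _ Hi); [exact: Rmin_pos | exact: Rmin_l].
Qed.

Lemma constr_open e d : constr e d ->
  exists r, 0 < r /\ forall d', Rabs (d' - d) < 2 * r -> constr e d'.
Proof.
case: e => /=.
- move=> H; exists ((d - 1) / 2); split; first lra.
  by move=> d' /Rabs_def2 [] ? ?; lra.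
- move=> H; exists (- d / 2); split; first lra.
  by move=> d' /Rabs_def2 [] ? ?; lra.
- move=> [H1 H2]; exists (Rmin d (1 - d) / 2); split.
    by have := Rmin_pos d (1 - d); lra.
  move=> d' /Rabs_def2 [] h1 h2; have := Rmin_l d (1 - d); have := Rmin_r d (1 - d); lra.
Qed.

Lemma strict_open n (P : mgraph n) x : strict P x ->
  exists r, 0 < r /\ forall y, Rn_ball x r y -> strict P y.
Proof.
move=> Hx.
have Hex : forall j : 'I_n, exists r, 0 < r /\ (forall y, Rn_ball x r y ->
    forall k : 'I_n, (j < k)%N -> constr (P j k) (y j - y k)).
  move=> j.
  have Hex2 : forall k : 'I_n, exists r, 0 < r /\ (forall y, Rn_ball x r y ->
    (j < k)%N -> constr (P j k) (y j - y k)).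
    move=> k; case: (ltnP j k) => Hjk.
      have [r [Hr H]] := constr_open (Hx j k Hjk).
      exists r; split => // y Hy _; apply: H; exact: ball_diff.
    by exists 1; split; [lra| move=> y _].
  have [|r [Hr H]] := @fin_min _ (fun (k : 'I_n) r => forall y, Rn_ball x r y ->
    (j < k)%N -> constr (P j k) (y j - y k)) _ Hex2.
    by move=> i r r' _ Hr' H y Hy; apply: H; apply: ball_mono Hy.
  by exists r; split => // y Hy k; apply: H.
have [|r [Hr H]] := @fin_min _ (fun (j : 'I_n) r => forall y, Rn_ball x r y ->
    forall k : 'I_n, (j < k)%N -> constr (P j k) (y j - y k)) _ Hex.
  by move=> i r r' _ Hr' H y Hy; apply: H; apply: ball_mono Hy.
by exists r; split => // y Hy j k; apply: H.
Qed.

Definition upd n (x : pt n) (j : 'I_n) (d : R) : pt n :=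
  fun i => if i == j then x j + d else x i.

Lemma ball_upd n (x : pt n) j d r : 0 < r -> Rabs d < r -> Rn_ball x r (upd x j d).
Proof.
move=> Hr Hd i; rewrite /upd; case: eqP => [->|_].
  by replace (x j + d - x j) with d by ring.
by replace (x i - x i) with 0 by ring; rewrite Rabs_R0.
Qed.

Lemma strict_psi n (P : mgraph n) x : strict P x -> psi P x.
Proof.
move=> H j k Hjk; have := H j k Hjk; case: (P j k) => /=; unfold Rminus; lra.
Qed.

Lemma interior_psi n (P : mgraph n) x : Rn_interior (psi P) x <-> strict P x.
Proof.
split.
  move=> [r [Hr H]] j k Hjk.
  have Hkj : k != j by rewrite neq_ltn Hjk orbT.
  have Hp : forall d, Rabs d < r -> match P j k with
    | Down => 1 <= x j + d - x k
    | Downish => 0 <= x j + d - x k /\ x j + d - x k <= 1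
    | Up => x j + d - x k <= 0 end.
    move=> d Hd; have := H _ (@ball_upd n x j d r Hr Hd) j k Hjk; rewrite /upd eqxx (negbTE Hkj).
    by case: (P j k).
  have h1 : Rabs (r/2) < r by rewrite Rabs_right; lra.
  have h2 : Rabs (- (r/2)) < r by rewrite Rabs_Ropp Rabs_right; lra.
  move: (Hp _ h1) (Hp _ h2); case: (P j k) => /=; lra.
move=> /strict_open [r [Hr H]]; exists r; split => // y Hy; apply: strict_psi; exact: H.
Qed.

Definition seg n (a b : pt n) (t : R) : pt n := fun i => a i + t * (b i - a i).

Lemma constr_convex e u v t : constr e u -> constr e v -> 0 <= t <= 1 ->
  constr e ((1 - t) * u + t * v).
Proof.
have cc : forall c u v t, c < u -> c < v -> 0 <= t <= 1 -> c < (1 - t) * u + t * v.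
  move=> c' u' v' t' h1 h2 h3; case: (Rle_lt_dec t' (1/2)) => h4; nra.
have cc' : forall c u v t, u < c -> v < c -> 0 <= t <= 1 -> (1 - t) * u + t * v < c.
  move=> c' u' v' t' h1 h2 h3.
  have := cc (- c') (- u') (- v') t'; lra.
case: e => /=; [exact: cc | exact: cc' | move=> [? ?] [? ?] ?; split; [exact: cc|exact: cc']].
Qed.

Lemma strict_convex n (P : mgraph n) a b t :
  strict P a -> strict P b -> 0 <= t <= 1 -> strict P (seg a b t).
Proof.
move=> Ha Hb Ht j k Hjk.
have -> : seg a b t j - seg a b t k = (1 - t) * (a j - a k) + t * (b j - b k).
  by rewrite /seg; ring.
exact: constr_convex (Ha j k Hjk) (Hb j k Hjk) Ht.
Qed.

Lemma seg_cont n (a b : pt n) c r : 0 < r ->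
  exists d, 0 < d /\ forall s, Rabs (s - c) < d -> Rn_ball (seg a b c) r (seg a b s).
Proof.
move=> Hr.
have Hex : forall i : 'I_n, exists d, 0 < d /\ (forall s, Rabs (s - c) < d ->
   Rabs (seg a b s i - seg a b c i) < r).
  move=> i; set m := Rabs (b i - a i).
  have Hm : 0 <= m by apply: Rabs_pos.
  exists (r * / (m + 1)); split.
    apply: Rmult_lt_0_compat => //; apply: Rinv_0_lt_compat; lra.
  move=> s Hs.
  have : Rabs (s - c) * (m + 1) < r * / (m + 1) * (m + 1).
    by apply: Rmult_lt_compat_r => //; lra.
  rewrite Rmult_assoc Rinv_l ?Rmult_1_r; last lra.
  have -> : seg a b s i - seg a b c i = (s - c) * (b i - a i) by rewrite /seg; ring.
  rewrite Rabs_mult -/m => h.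
  have := Rabs_pos (s - c); nra.
have [|d [Hd H]] := @fin_min _ (fun (i : 'I_n) d => forall s, Rabs (s - c) < d ->
   Rabs (seg a b s i - seg a b c i) < r) _ Hex.
  by move=> i d d' _ Hd' H s Hs; apply: H; lra.
by exists d; split => // s Hs i; apply: H.
Qed.

Lemma strict_conn n (P : mgraph n) : Rn_connected (strict P).
Proof.
move=> U V HU HV Hcov Hdis [a [Sa Ua]] [b [Sb Vb]].
pose g := seg a b.
have Sg : forall t, 0 <= t <= 1 -> strict P (g t) by move=> t Ht; exact: strict_convex.
have gU0 : U (g 0).
  have [r [Hr H]] := HU a Ua; apply: H => i; rewrite /g /seg.
  by replace (a i + 0 * (b i - a i) - a i) with 0 by ring; rewrite Rabs_R0.
have gV1 : V (g 1).
  have [r [Hr H]] := HV b Vb; apply: H => i; rewrite /g /seg.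
  by replace (a i + 1 * (b i - a i) - b i) with 0 by ring; rewrite Rabs_R0.
pose E := fun t => 0 <= t <= 1 /\ forall s, 0 <= s <= t -> U (g s).
have E0 : E 0.
  split; first lra.
  move=> s Hs; by replace s with 0 by lra.
have Eb : bound E by exists 1 => t [[_ ?] _].
have [c [Hub Hlub]] := @completeness E Eb (ex_intro _ 0 E0).
have c0 : 0 <= c by apply: Hub.
have c1 : c <= 1 by apply: Hlub => t [[_ ?] _].
have Hclose : forall d, 0 < d -> exists t, E t /\ c - d < t.
  move=> d Hd; apply: NNPP => Hn.
  have : c <= c - d.
    apply: Hlub => t Et; case: (Rle_or_lt t (c - d)) => // h.
    by exfalso; apply: Hn; exists t.
  lra.
case: (Hcov (g c) (Sg c (conj c0 c1))) => Hgc.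
- have [r [Hr HUr]] := HU _ Hgc.
  have [d [Hd Hcont]] := seg_cont a b c Hr.
  have [t [Et Ht]] := Hclose d Hd.
  have tc : t <= c by apply: Hub.
  pose t' := Rmin 1 (c + d / 2).
  have Et' : E t'.
    split.
      split; last exact: Rmin_l.
      by apply: Rmin_glb; lra.
    move=> s [s0 s1]; case: (Rle_or_lt s t) => hs.
      by apply: (proj2 Et); lra.
    apply: HUr; apply: Hcont; apply: Rabs_def1; have := Rmin_r 1 (c + d / 2); rewrite -/t'; lra.
  have := Hub _ Et'; rewrite /t'.
  case: (Rle_dec 1 (c + d / 2)) => h.
    rewrite Rmin_left // => _.
    apply: (Hdis (g 1) (Sg 1 ltac:(lra))) gV1.
    have := proj2 Et' 1; rewrite /t' Rmin_left //; apply; lra.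
  rewrite Rmin_right; lra.
- have [r [Hr HVr]] := HV _ Hgc.
  have [d [Hd Hcont]] := seg_cont a b c Hr.
  have [t [Et Ht]] := Hclose d Hd.
  have tc : t <= c by apply: Hub.
  have t01 : 0 <= t <= 1 by case: Et; lra.
  apply: (Hdis (g t) (Sg t t01)).
    by apply: (proj2 Et); lra.
  by apply: HVr; apply: Hcont; apply: Rabs_def1; lra.
Qed.

Lemma strict_compl n (P : mgraph n) x : strict P x -> shi_complement x.
Proof.
move=> H j k Hjk; have := H j k Hjk; rewrite /Rminus.
case: (P j k) => /=; split; lra.
Qed.

Definition bad (e : edge) (d : R) : Prop :=
  match e with
  | Down => d < 1
  | Downish => d < 0 \/ 1 < d
  | Up => 0 < d
  end.

Lemma bad_open e d : bad e d ->
  exists r, 0 < r /\ forall d', Rabs (d' - d) < 2 * r -> bad e d'.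
Proof.
case: e => /=.
- move=> H; exists ((1 - d) / 2); split; first lra.
  by move=> d' /Rabs_def2 [] ? ?; lra.
- move=> H; exists (d / 2); split; first lra.
  by move=> d' /Rabs_def2 [] ? ?; lra.
- case=> H.
    exists (- d / 2); split; first lra.
    by move=> d' /Rabs_def2 [] ? ?; left; lra.
  exists ((d - 1) / 2); split; first lra.
  by move=> d' /Rabs_def2 [] ? ?; right; lra.
Qed.

Lemma compl_dich e d : d <> 0 -> d <> 1 -> constr e d \/ bad e d.
Proof.
move=> h0 h1; case: e => /=.
- case: (Rlt_or_le 1 d) => h; [left | right] => //; lra.
- case: (Rlt_or_le d 0) => h; [left | right] => //; lra.
- case: (Rlt_or_le d 0) => h; first by right; left.
  case: (Rlt_or_le 1 d) => h'; first by right; right.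
  left; lra.
Qed.

Lemma not_both e d : constr e d -> bad e d -> False.
Proof. case: e => /=; lra. Qed.

Lemma conn_ext n (A B : pt n -> Prop) : same_set A B -> Rn_connected A -> Rn_connected B.
Proof.
move=> E HA U V HU HV Hc Hd [x [Bx Ux]] [y [By Vy]].
apply: (HA U V HU HV).
- by move=> z /E; apply: Hc.
- by move=> z /E; apply: Hd.
- by exists x; split => //; apply/E.
- by exists y; split => //; apply/E.
Qed.

Lemma strict_max n (P : mgraph n) (D : pt n -> Prop) : Rn_connected D ->
  (forall x, D x -> shi_complement x) -> (exists x, D x /\ strict P x) ->
  forall z, D z -> strict P z.
Proof.
move=> HD Hc [x0 [Dx0 Sx0]] z Dz.
pose V (y : pt n) := exists j k : 'I_n, (j < k)%N /\ bad (P j k) (y j - y k).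
have HSV : forall y, D y -> ~ V y -> strict P y.
  move=> y Dy hV j k Hjk; have [h0 h1] := Hc y Dy j k Hjk.
  case: (compl_dich (P j k) h0 h1) => // hb; exfalso; apply: hV; by exists j, k.
apply: NNPP => Hz.
apply: (HD (strict P) V).
- by move=> y /strict_open.
- move=> y [j [k [Hjk Hb]]]; have [r [Hr H]] := bad_open Hb.
  exists r; split => // y' Hy'; exists j, k; split => //; apply: H; exact: ball_diff.
- move=> y Dy; case: (classic (V y)) => h; [by right | left; exact: HSV].
- by move=> y _ Sy [j [k [Hjk Hb]]]; exact: not_both (Sy j k Hjk) Hb.
- by exists x0.
- exists z; split => //; apply: NNPP => hV; apply: Hz; exact: HSV.
Qed.

Section Basic.
Variables (n : nat) (P : mgraph n).

Lemma arc_irr u : arc P u u = false.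
Proof. by rewrite /arc ltnn. Qed.

Lemma arc_total (u v : 'I_n) : u != v -> arc P u v || arc P v u.
Proof.
move=> Huv; rewrite /arc; case: (ltngtP u v) => h.
- by case: (isUp (P u v)).
- by case: (isUp (P v u)).
- by move: Huv; rewrite (val_inj h) eqxx.
Qed.

Lemma lab_sym u v : lab P u v = lab P v u.
Proof.
rewrite /lab; case: (ltngtP u v) => h //.
by rewrite (val_inj h).
Qed.

Lemma arc_neq u v : arc P u v -> u != v.
Proof. by apply: contraTneq => ->; rewrite arc_irr. Qed.

Lemma arc_up u v : arc P u v -> isUp (lab P u v) = (u < v)%N.
Proof.
rewrite /arc /lab; case: (ltngtP u v) => h //.
by move=> /negbTE.
Qed.

Hypothesis Hac : acyclic P.

Lemma arc_asym u v : arc P u v -> ~~ arc P v u.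
Proof.
move=> huv; apply/negP => hvu; have := Hac huv; by rewrite connect1.
Qed.

Lemma arc_trans u v w : arc P u v -> arc P v w -> arc P u w.
Proof.
move=> huv hvw.
have Huw : u != w.
  by apply/eqP => Huw; subst w; move: (arc_asym huv); rewrite hvw.
case/orP: (arc_total Huw) => // hwu; exfalso.
have := Hac huv; rewrite (connect_trans (connect1 hvw) (connect1 hwu)) //.
Qed.

End Basic.

Lemma sort3 n (u v w : 'I_n) : u != v -> v != w -> u != w ->
  exists a b c : 'I_n, (a < b)%N /\ (b < c)%N /\
    forall y, (y \in [:: u; v; w]) = (y \in [:: a; b; c]).
Proof.
move=> H1 H2 H3.
have N1 : (val u != val v) by [].
have N2 : (val v != val w) by [].
have N3 : (val u != val w) by [].
rewrite neq_ltn in N1; rewrite neq_ltn in N2; rewrite neq_ltn in N3.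
case/orP: N1 => h1; case/orP: N2 => h2; case/orP: N3 => h3.
all: first [ exfalso; move: h1 h2 h3; lia | idtac ].
all: let fin := (split; [by [] | split; [by [] | move=> y; rewrite !inE;
       by case: (y == u); case: (y == v); case: (y == w)]]) in
  first [ exists u, v, w; fin | exists u, w, v; fin | exists v, u, w; fin
        | exists v, w, u; fin | exists w, u, v; fin | exists w, v, u; fin ].
Qed.

Lemma lab_in3 n (P : mgraph n) (a b c : 'I_n) (f : edge -> bool) p q :
  (a < b)%N -> (b < c)%N -> p \in [:: a; b; c] -> q \in [:: a; b; c] -> p != q ->
  f (lab P p q) -> [|| f (P a b), f (P a c) | f (P b c)].
Proof.
move=> hab hbc; have hac := ltn_trans hab hbc.
rewrite !inE => /or3P [] /eqP -> /or3P [] /eqP -> //; rewrite ?eqxx //= => _;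
  rewrite /lab ?hab ?hbc ?hac ?(ltnNge b a) ?(ltnNge c a) ?(ltnNge c b)
    ?(ltnW hab) ?(ltnW hbc) ?(ltnW hac) /= => ->; rewrite ?orbT //.
Qed.

Lemma tri_pred n (P : mgraph n) : triangle_cond P -> forall a b c : 'I_n,
  (a < b)%N -> (b < c)%N ->
  forall S : pred 'I_n, (forall y, S y = (y \in [:: a; b; c])) ->
  (exists p q, [/\ S p, S q, p != q & isDown (lab P p q)]) ->
  (exists p q, [/\ S p, S q, p != q & isDownish (lab P p q)]) ->
  forall s t, S s -> S t -> s != t -> (forall y, S y -> ~~ arc P y s) ->
  (forall y, S y -> ~~ arc P t y) -> ~~ isDownish (lab P s t).
Proof.
move=> Htc a b c hab hbc S HS [p [q [Sp Sq pq Dp]]] [p' [q' [Sp' Sq' pq' Dp']]]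
  s t Ss St st Hs Ht.
move: Sp Sq Sp' Sq' Ss St; rewrite !HS => Sp Sq Sp' Sq' Ss St.
apply: (Htc a b c hab hbc) => //.
- exact: (@lab_in3 n P a b c isDown p q hab hbc Sp Sq pq Dp).
- exact: (lab_in3 (f := isDownish) hab hbc Sp' Sq' pq' Dp').
- by move=> y Hy; apply: Hs; rewrite HS.
- by move=> y Hy; apply: Ht; rewrite HS.
Qed.

Lemma tri_chain n (P : mgraph n) : parking_graph P -> forall u v w : 'I_n,
  arc P u v -> arc P v w ->
  [|| isDown (lab P u v), isDown (lab P u w) | isDown (lab P v w)] ->
  [|| isDownish (lab P u v), isDownish (lab P u w) | isDownish (lab P v w)] ->
  ~~ isDownish (lab P u w).
Proof.
move=> [Hac Htc] u v w huv hvw HD HDs.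
have huw := arc_trans Hac huv hvw.
have [a [b [c [hab [hbc HS]]]]] :=
  sort3 (arc_neq huv) (arc_neq hvw) (arc_neq huw).
have mu : u \in [:: u; v; w] by rewrite !inE eqxx.
have mv : v \in [:: u; v; w] by rewrite !inE eqxx orbT.
have mw : w \in [:: u; v; w] by rewrite !inE eqxx !orbT.
apply: (tri_pred Htc hab hbc (S := fun y => y \in [:: u; v; w])) => //.
- case/or3P: HD => h.
  + by exists u, v; split => //; exact: arc_neq huv.
  + by exists u, w; split => //; exact: arc_neq huw.
  + by exists v, w; split => //; exact: arc_neq hvw.
- case/or3P: HDs => h.
  + by exists u, v; split => //; exact: arc_neq huv.
  + by exists u, w; split => //; exact: arc_neq huw.
  + by exists v, w; split => //; exact: arc_neq hvw.
- exact: arc_neq huw.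
- move=> y; rewrite !inE => /or3P [] /eqP ->. 
  + by rewrite arc_irr.
  + by have := arc_asym Hac huv.
  + by have := arc_asym Hac huw.
- move=> y; rewrite !inE => /or3P [] /eqP ->.
  + by have := arc_asym Hac huw.
  + by have := arc_asym Hac hvw.
  + by rewrite arc_irr.
Qed.


Lemma argmax (I : finType) (p : pred I) (f : I -> R) i0 : p i0 ->
  exists i, p i /\ forall j, p j -> f j <= f i.
Proof.
move=> pi0.
suff: forall s : seq I, exists i, p i /\ forall j, j \in s -> p j -> f j <= f i.
  move=> /(_ (enum I)) [i [pi H]]; exists i; split => // j; apply: H; by rewrite mem_enum.
elim=> [|a s [i [pi IH]]]; first by exists i0; split.
case pa: (p a); last first.
  exists i; split => // j; rewrite inE => /orP [/eqP ->|hj]; [by rewrite pa | exact: IH].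
case: (Rle_lt_dec (f a) (f i)) => h.
  exists i; split => // j; rewrite inE => /orP [/eqP -> //|hj]; exact: IH.
exists a; split => // j; rewrite inE => /orP [/eqP -> _|hj pj]; first lra.
have := IH j hj pj; lra.
Qed.

Lemma interval_choice (I : finType) (pl ph : pred I) (lo hi : I -> R) :
  (forall i j, pl i -> ph j -> lo i < hi j) ->
  exists t, (forall i, pl i -> lo i < t) /\ (forall j, ph j -> t < hi j).
Proof.
move=> H.
case: (pickP pl) => [i0 hi0 | nol]; case: (pickP ph) => [j0 hj0 | noh].
- have [i [pi Hi]] := argmax lo hi0.
  have [j [pj Hj]] := argmax (fun j => - hi j) hj0.
  have := H i j pi pj => hij.
  exists ((lo i + hi j) / 2); split => k hk.
    by have := Hi k hk; lra.
  by have := Hj k hk; lra.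
- have [i [pi Hi]] := argmax lo hi0.
  exists (lo i + 1); split => k hk; last by rewrite noh in hk.
  by have := Hi k hk; lra.
- have [j [pj Hj]] := argmax (fun j => - hi j) hj0.
  exists (hi j - 1); split => k hk; first by rewrite nol in hk.
  by have := Hj k hk; lra.
- by exists 0; split => k hk; [rewrite nol in hk | rewrite noh in hk].
Qed.

Section Core.
Variables (n : nat) (P : mgraph n).
Hypothesis HP : parking_graph P.
Let Hac : acyclic P := proj1 HP.

Lemma tri_use u v w : arc P u v -> arc P v w ->
  [|| isDown (lab P u v), isDown (lab P u w) | isDown (lab P v w)] ->
  [|| isDownish (lab P u v), isDownish (lab P u w) | isDownish (lab P v w)] ->
  isDownish (lab P u w) -> False.
Proof. by move=> h1 h2 h3 h4 h5; move: (tri_chain HP h1 h2 h3 h4); rewrite h5. Qed.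

Lemma arc_gt u v : arc P u v -> ~~ isUp (lab P u v) -> (v < u)%N.
Proof. by rewrite /arc /lab; case: (ltngtP u v) => _ //= ->. Qed.

Lemma arc_lt u v : arc P u v -> isUp (lab P u v) -> (u < v)%N.
Proof. by move=> h; rewrite (arc_up h). Qed.

Definition containsb (w u : 'I_n) : bool :=
  [exists a', [exists b', [&& (a' == w) || arc P w a', arc P a' b',
     isDown (lab P a' b') & (b' == u) || arc P b' u]]].

Lemma contains_lo w' w u : arc P w' w -> containsb w u -> containsb w' u.
Proof.
move=> h /existsP [a' /existsP [b' /and4P [Ha Hab Hd Hb]]].
apply/existsP; exists a'; apply/existsP; exists b'; rewrite Hab Hd Hb /= andbT.
case/orP: Ha => [/eqP ->|h']; first by rewrite h orbT.
by rewrite (arc_trans Hac h h') orbT.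
Qed.

Lemma contains_hi w u u' : arc P u u' -> containsb w u -> containsb w u'.
Proof.
move=> h /existsP [a' /existsP [b' /and4P [Ha Hab Hd Hb]]].
apply/existsP; exists a'; apply/existsP; exists b'; rewrite Ha Hab Hd /=.
case/orP: Hb => [/eqP ->|h']; first by rewrite h orbT.
by rewrite (arc_trans Hac h' h) orbT.
Qed.

Lemma no_contains k j : arc P k j -> isDownish (lab P k j) -> ~~ containsb k j.
Proof.
move=> hkj Hds; apply/negP => /existsP [a' /existsP [b' /and4P [Ha Hab Hd Hb]]].
case/orP: Ha => [/eqP Ea | hka]; case/orP: Hb => [/eqP Eb | hbj].
- by subst; move: Hd Hds; case: (lab P _ _).
- subst a'; by apply: (tri_use Hab hbj); rewrite ?Hd ?Hds ?orbT.
- subst b'; by apply: (tri_use hka Hab); rewrite ?Hd ?Hds ?orbT.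
- have hkb := arc_trans Hac hka Hab.
  have haj := arc_trans Hac Hab hbj.
  have i1 : (j < k)%N by move: (arc_gt hkj); apply; move: Hds; case: (lab P k j).
  have i2 : (b' < a')%N by move: (arc_gt Hab); apply; move: Hd; case: (lab P a' b').
  have i3 : (k < b')%N.
    case E1: (lab P k b').
    + by exfalso; apply: (tri_use hkb hbj); rewrite ?E1 ?Hds ?orbT.
    + by move: (arc_lt hkb); apply; rewrite E1.
    + by exfalso; apply: (tri_use hka Hab); rewrite ?E1 ?Hd ?orbT.
  have i4 : (a' < j)%N.
    case E2: (lab P a' j).
    + by exfalso; apply: (tri_use hka haj); rewrite ?E2 ?Hds ?orbT.
    + by move: (arc_lt haj); apply; rewrite E2.
    + by exfalso; apply: (tri_use Hab hbj); rewrite ?E2 ?Hd ?orbT.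
  move: i1 i2 i3 i4; lia.
Qed.

End Core.

Section Rank.
Variables (n : nat) (P : mgraph n).
Hypothesis HP : parking_graph P.
Let Hac : acyclic P := proj1 HP.

Definition rk (u : 'I_n) : nat := #|[set v | arc P v u]|.

Lemma rk_lt u v : arc P u v -> (rk u < rk v)%N.
Proof.
move=> huv; apply: proper_card; apply/properP; split.
  by apply/subsetP => w; rewrite !inE => h; move: (arc_trans Hac h huv).
by exists u; rewrite !inE ?arc_irr.
Qed.

Lemma rk_ltn u : (rk u < n)%N.
Proof.
have : [set v | arc P v u] \proper [set: 'I_n].
  apply/properP; split; first exact: subsetT.
  by exists u; rewrite !inE ?arc_irr.
by move/proper_card; rewrite cardsT card_ord.
Qed.

Lemma rk_arc w u : (rk w < rk u)%N -> arc P w u.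
Proof.
move=> h; have hne : w != u by apply: contraTneq h => ->; rewrite ltnn.
case/orP: (arc_total P hne) => // h'; have := rk_lt h'; lia.
Qed.

Lemma rk_eq w u : rk w = rk u -> w = u.
Proof.
move=> h; apply/eqP; apply: contraT => hne.
case/orP: (arc_total P hne) => h'; have := rk_lt h'; lia.
Qed.

Definition Inv (k : nat) (x : pt n) : Prop :=
  forall w u, (rk w < k)%N -> (rk u < k)%N -> arc P w u ->
    x w < x u /\ (containsb P w u -> 1 < x u - x w) /\
    (~~ containsb P w u -> x u - x w < 1).

Lemma Inv_step k x : Inv k x -> exists x', Inv k.+1 x'.
Proof.
move=> Hx.
case: (pickP (fun m => rk m == k)) => [m /eqP Hm | Hno]; last first.
  exists x => w u Hw Hu; apply: Hx.
    by move: (Hno w) Hw => /= /negbT; lia.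
  by move: (Hno u) Hu => /= /negbT; lia.
have HC : forall w w', (rk w < k)%N -> (rk w' < k)%N && ~~ containsb P w' m ->
    x w + (if containsb P w m then 1 else 0) < x w' + 1.
  move=> w w' Hw /andP [Hw' Hc].
  have hwm : arc P w m by apply: rk_arc; rewrite Hm.
  have hw'm : arc P w' m by apply: rk_arc; rewrite Hm.
  case: (eqVneq w w') => [Ew|hne]; first by subst w'; rewrite (negbTE Hc); lra.
  case/orP: (arc_total P hne) => h.
    have [h1 _] := Hx w w' Hw Hw' h.
    by case: (containsb P w m); lra.
  have -> : containsb P w m = false.
    by apply: contraNF Hc; exact: contains_lo.
  have [h1 [_ h3]] := Hx w' w Hw' Hw h.
  have : ~~ containsb P w' w.
    by apply: contraNN Hc; exact: contains_hi.
  move/h3; lra.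
have [t [Hlo Hhi]] := @interval_choice _ (fun w => rk w < k)%N
  (fun w => (rk w < k)%N && ~~ containsb P w m)
  (fun w => x w + (if containsb P w m then 1 else 0)) (fun w => x w + 1) HC.
exists (fun i => if i == m then t else x i) => w u Hw Hu Hwu.
rewrite ltnS in Hw Hu.
case: (eqVneq w m) => [Ewm | Nwm]; case: (eqVneq u m) => [Eum | Num].
- by subst; rewrite arc_irr in Hwu.
- subst w; exfalso.
  have : rk u != k by apply: contra Num => /eqP h; apply/eqP; apply: rk_eq; rewrite h Hm.
  have := rk_lt Hwu; lia.
- subst u.
  have hw : (rk w < k)%N.
    have : rk w != k by apply: contra Nwm => /eqP h; apply/eqP; apply: rk_eq; rewrite h Hm.
    lia.
  have h1 := Hlo w hw.
  split; first by move: h1 => /=; case: (containsb P w m) => /=; lra.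
  split; first by move: h1 => /=; move=> h2 h3; rewrite h3 in h2; lra.
  by move=> hc; have := Hhi w; rewrite /= hw hc => /(_ isT); lra.
- 
  apply: Hx => //.
    have : rk w != k by apply: contra Nwm => /eqP h; apply/eqP; apply: rk_eq; rewrite h Hm.
    lia.
  have : rk u != k by apply: contra Num => /eqP h; apply/eqP; apply: rk_eq; rewrite h Hm.
  lia.
Qed.

Lemma Inv_all k : exists x, Inv k x.
Proof.
elim: k => [|k [x Hx]]; last exact: Inv_step Hx.
by exists (fun _ => 0) => w u.
Qed.

Lemma exists_strict : exists x, strict P x.
Proof.
have [x Hx] := Inv_all n.
exists x => j k Hjk.
have Hj := rk_ltn j; have Hk := rk_ltn k.
have Hkj : (k < j)%N = false by apply/negbTE; rewrite -leqNgt ltnW.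
case E: (P j k) => /=.
- have hkj : arc P k j by rewrite /arc Hkj Hjk E.
  have [_ [h _]] := Hx k j Hk Hj hkj.
  apply: h; apply/existsP; exists k; apply/existsP; exists j.
  by rewrite eqxx hkj /lab Hkj E eqxx.
- have hjk : arc P j k by rewrite /arc Hjk E.
  have [h _] := Hx j k Hj Hk hjk; lra.
- have hkj : arc P k j by rewrite /arc Hkj Hjk E.
  have [h1 [_ h3]] := Hx k j Hk Hj hkj.
  have : ~~ containsb P k j by apply: no_contains => //; rewrite /lab Hkj E.
  move/h3; lra.
Qed.

End Rank.

Definition Gx n (x : pt n) : mgraph n := fun j k =>
  if Rlt_dec 1 (x j - x k) then Down else if Rlt_dec 0 (x j - x k) then Downish else Up.

Lemma neq_lt (a b : R) : a <> b -> a <= b -> a < b.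
Proof. by move=> h1 /Rle_lt_or_eq_dec [] // /h1. Qed.

Section G.
Variables (n : nat) (x : pt n).
Hypothesis Hc : shi_complement x.

Lemma Gx_strict : strict (Gx x) x.
Proof.
move=> j k Hjk; have [h0 h1] := Hc Hjk; rewrite /Gx.
case: Rlt_dec => h /=; first lra.
case: Rlt_dec => h' /=.
  by split => //; apply: neq_lt => //; lra.
by apply: neq_lt; lra.
Qed.

Lemma Gx_arc u v : arc (Gx x) u v <-> x u < x v.
Proof.
rewrite /arc; case: (ltngtP u v) => h.
- have [h0 _] := Hc h; rewrite /Gx.
  case: Rlt_dec => h1 /=; first by split => //; lra.
  case: Rlt_dec => h2 /=; first by split => //; lra.
  by split => // _; have := neq_lt h0; lra.
- have [h0 _] := Hc h; rewrite /Gx.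
  case: Rlt_dec => h1 /=; first by split => //; lra.
  case: Rlt_dec => h2 /=; first by split => //; lra.
  by split => // h3; lra.
- by rewrite (val_inj h); split => //; lra.
Qed.

Lemma Gx_parking : parking_graph (Gx x).
Proof.
split.
  move=> u v /Gx_arc huv; apply/negP => /connectP [p Hp Hl].
  suff: forall w, path (arc (Gx x)) w p -> x w <= x (last w p).
    by move=> /(_ v Hp); rewrite -Hl; lra.
  elim: p {Hp Hl} => [|a p IH] w /=; first by move=> _; lra.
  by move=> /andP [/Gx_arc h1 /IH h2]; lra.
move=> a b c _ _ /= HD _ s t Hs Ht _ Hsrc Hsnk; apply/negP => Hds.
have Ls : forall y, y \in [:: a; b; c] -> x s <= x y.
  by move=> y hy; apply: Rnot_lt_le => hlt; have := Hsrc y hy; rewrite (proj2 (Gx_arc y s) hlt).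
have Lt : forall y, y \in [:: a; b; c] -> x y <= x t.
  by move=> y hy; apply: Rnot_lt_le => hlt; have := Hsnk y hy; rewrite (proj2 (Gx_arc t y) hlt).
have Hst : x t - x s <= 1.
  move: Hds; rewrite /lab /Gx; case: ifP => _;
  (case: Rlt_dec => h1 //=; case: Rlt_dec => h2 //= _); have := Ls t Ht; lra.
have ma : a \in [:: a; b; c] by rewrite !inE eqxx.
have mb : b \in [:: a; b; c] by rewrite !inE eqxx orbT.
have mc : c \in [:: a; b; c] by rewrite !inE eqxx !orbT.
have DG : forall j k, isDown (Gx x j k) -> 1 < x j - x k.
  by move=> j k; rewrite /Gx; case: Rlt_dec => h1 //=; case: Rlt_dec.
case/or3P: HD => /DG h.
- by have := Lt a ma; have := Ls b mb; lra.
- by have := Lt a ma; have := Ls c mc; lra.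
- by have := Lt b mb; have := Ls c mc; lra.
Qed.

End G.

Lemma strict_det n (P Q : mgraph n) x : strict P x -> strict Q x -> same_graph P Q.
Proof.
move=> HP HQ j k Hjk; move: (HP j k Hjk) (HQ j k Hjk).
by case: (P j k); case: (Q j k) => //=; lra.
Qed.

Lemma ss_strict n (P : mgraph n) : same_set (Rn_interior (psi P)) (strict P).
Proof. move=> x; exact: interior_psi. Qed.

Theorem theorem2p1 (n : nat) :
  (forall P : mgraph n, parking_graph P ->
     (exists x : pt n, Rn_interior (psi P) x) /\ shi_region (Rn_interior (psi P))) /\
  (forall P Q : mgraph n, parking_graph P -> parking_graph Q ->
     same_set (Rn_interior (psi P)) (Rn_interior (psi Q)) -> same_graph P Q) /\
  (forall C : pt n -> Prop, shi_region C ->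
     exists P : mgraph n, parking_graph P /\ same_set (Rn_interior (psi P)) C).
Proof.
split; [|split].
- move=> P HP; have [x Hx] := exists_strict HP.
  split; first by exists x; apply/interior_psi.
  split; [|split; [|split]].
  + by move=> y /interior_psi; exact: strict_compl.
  + by exists x; apply/interior_psi.
  + apply: (@conn_ext _ (strict P)); last exact: strict_conn.
    by move=> y; split => /interior_psi.
  + move=> D HDc HD Hsub z Dz; apply/interior_psi.
    apply: (strict_max HD HDc) => //.
    by exists x; split; [apply: Hsub; apply/interior_psi|].
- move=> P Q HP HQ E; have [x Hx] := exists_strict HP.
  apply: (strict_det Hx); apply/interior_psi; apply/E; exact/interior_psi.
- move=> C [HCc [[x Cx] [HCconn HCmax]]].
  have Hx := HCc x Cx.
  exists (Gx x); split; first exact: Gx_parking.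
  have HCs : forall z, C z -> strict (Gx x) z.
    apply: (strict_max HCconn HCc); exists x; split => //; exact: Gx_strict.
  move=> z; split.
    move=> /interior_psi Hz; apply: (HCmax (strict (Gx x))) => //.
    + by move=> y /strict_compl.
    + exact: strict_conn.
  by move=> /HCs /interior_psi.
Qed.
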